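(* Haechi (described in the context) provides finalization fairness for a sharded system: for any order-sensitive contract $\epsilon$ and any two transactions $TX^1_{\mapsto\epsilon_1}$, $TX^2_{\mapsto\epsilon_2}$ with $\epsilon\in\Upsilon(TX^1_{\mapsto\epsilon_1})\cap\Upsilon(TX^2_{\mapsto\epsilon_2})$, if $TX^1_{\mapsto\epsilon_1}\prec_{\mathbf P} TX^2_{\mapsto\epsilon_2}$ then $TX^1_{\mapsto\epsilon_1}\prec_{\mathbf E} TX^2_{\mapsto\epsilon_2}$.
   Context: Setting. A sharded blockchain has shards $S_1,\dots,S_m$, each running a BFT consensus with fewer than one third Byzantine nodes, plus a beacon shard $S_0$ maintaining a beacon chain. Shard $S_i$ maintains a chain $SC_i$, $SC_i^h$ being its block at height $h$; each block carries a publicly verifiable block timestamp $f_{bt}(\cdot)$, strictly increasing with height within a shard; $f_{idx}(\cdot)$ gives a transaction's index in its block. $TX_{\mapsto\epsilon}$ denotes a transaction calling contract $\epsilon$; $\Upsilon(TX_{\mapsto\epsilon})$ is the set of contracts called when executing $\epsilon$, and $TX_{\mapsto\epsilon,\epsilon_k}$ the sub-transaction calling $\epsilon_k$. Processing order: $TX^1\prec_{\mathbf P}TX^2$ if (i) both are in the same block and $f_{idx}(TX^1)<f_{idx}(TX^2)$, or (ii) $TX^1\in SC_i^m$, $TX^2\in SC_i^n$ with $m<n$, or (iii) $TX^1\in SC_i^m$, $TX^2\in SC_j^n$ with $f_{bt}(SC_i^m)<f_{bt}(SC_j^n)$. Execution order: $TX^1_{\mapsto\epsilon_1}\prec_{\mathbf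 E}TX^2_{\mapsto\epsilon_2}$ if for every $\epsilon_k\in\Upsilon(TX^1_{\mapsto\epsilon_1})\cap\Upsilon(TX^2_{\mapsto\epsilon_2})$ the sub-transaction $TX^1_{\mapsto\epsilon_1,\epsilon_k}$ is executed before $TX^2_{\mapsto\epsilon_2,\epsilon_k}$. Haechi protocol for order-sensitive-contract transactions (OTXs): (1) Processing: a sender shard processes an OTX (e.g. withdraws the sender's funds) in a block, and for each block at height $h$ sends the beacon chain a certified CrossLink $\langle blockTS, L_{tx}, i, h\rangle$ containing the block's valid new OTXs in block order. (2) Ordering: the beacon chain keeps, for each shard $i$, a sequence $shardCLs[i]$ of received CrossLinks of consecutive heights (out-of-order ones buffered), and $shardLastTS[i]$, the timestamp of its last element; once all $shardCLs[i]$ are nonempty, it selects the CrossLinks with $blockTS\le\min_i shardLastTS[i]$ and orders their OTXs by block timestamp, then by index in the CrossLink, agreeing on this via BFT consensus, and sends to each contract shard the ordered list of OTXs calling its contracts. (3) Execution: contract shards execute the called contracts in the received order. (4) Commitment: the sender shard commits or aborts each OTX based on execution results and notifies involved shards. *)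

(* Defs.v *)
From mathcomp Require Import all_boot.
Set Implicit Arguments. Unset Strict Implicit. Unset Printing Implicit Defensive.

(* A block of a shard chain: its (publicly verifiable) block timestamp f_bt
   and its transactions, in block order (position = f_idx). *)
Record block (Tx : Type) := Block { bts : nat; btxs : seq Tx }.

Record crosslink (Tx : Type) (m : nat) :=
  CL { cl_ts : nat; cl_txs : seq Tx; cl_shard : 'I_m; cl_h : nat }.

(* Beacon-chain state: for each shard, the heights of the CrossLinks received
   so far (including buffered out-of-order ones), and the heights whose
   CrossLinks have already been ordered. *)
Record bstate (m : nat) :=
  BS { recv : 'I_m -> seq nat; ordd : 'I_m -> seq nat }.

Section Haechi.
Variables (Tx Ct : eqType) (m : nat).
(* Ups tx = Upsilon(tx): contracts called when executing tx;
   os = the order-sensitive contracts. *)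
Variables (Ups : Tx -> seq Ct) (os : pred Ct).
(* C i = the chain SC_i of shard S_i; (C i)`_h is SC_i^h. *)
Variable C : 'I_m -> seq (block Tx).

Definition OTX (tx : Tx) : bool := has os (Ups tx).

Definition blk (i : 'I_m) (h : nat) : block Tx := nth (Block 0 [::]) (C i) h.

Definition at_pos (tx : Tx) (i : 'I_m) (h k : nat) : bool :=
  [&& h < size (C i), k < size (btxs (blk i h)) & nth tx (btxs (blk i h)) k == tx].

Definition precP (tx1 tx2 : Tx) : Prop :=
  exists (i1 : 'I_m) h1 k1 (i2 : 'I_m) h2 k2,
    at_pos tx1 i1 h1 k1 /\ at_pos tx2 i2 h2 k2 /\
    [\/ [/\ i1 = i2, h1 = h2 & k1 < k2],
        (i1 = i2 /\ h1 < h2)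
      | bts (blk i1 h1) < bts (blk i2 h2)].

Definition mkCL (i : 'I_m) (h : nat) : crosslink Tx m :=
  CL (bts (blk i h)) [seq tx <- btxs (blk i h) | OTX tx] i h.

(* Number of consecutive heights 0,1,.. received. *)
Definition prefix_len (s : seq nat) : nat :=
  find (fun n => n \notin s) (iota 0 (size s).+1).

Definition shardCLs (st : bstate m) (i : 'I_m) : seq nat :=
  [seq h <- iota 0 (prefix_len (recv st i)) | h \notin ordd st i].

Definition ready (st : bstate m) : bool :=
  all (fun i => shardCLs st i != [::]) (enum 'I_m).

Definition lastTS (st : bstate m) (i : 'I_m) : nat :=
  bts (blk i (last 0 (shardCLs st i))).

Definition thr (st : bstate m) : nat :=
  foldr minn (\max_(i < m) lastTS st i) [seq lastTS st i | i <- enum 'I_m].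

Definition selected (st : bstate m) (i : 'I_m) : seq nat :=
  [seq h <- shardCLs st i | bts (blk i h) <= thr st].

Definition cl_items (c : crosslink Tx m) : seq (nat * nat * Tx) :=
  [seq (cl_ts c, kt.1, kt.2) | kt <- zip (iota 0 (size (cl_txs c))) (cl_txs c)].

Definition key_le (a b : nat * nat * Tx) : bool :=
  (a.1.1 < b.1.1) || ((a.1.1 == b.1.1) && (a.1.2 <= b.1.2)).

Definition batch (st : bstate m) : seq Tx :=
  [seq x.2 | x <- sort key_le
     (flatten [seq flatten [seq cl_items (mkCL i h) | h <- selected st i]
              | i <- enum 'I_m])].

Definition init_state : bstate m := BS (fun _ => [::]) (fun _ => [::]).

(* Arrival of the CrossLink of SC_i^h at the beacon chain; then, if all
   shardCLs[i] are nonempty, one ordering round. *)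
Definition step (so : bstate m * seq Tx) (a : 'I_m * nat) : bstate m * seq Tx :=
  let st1 := BS (fun j => if j == a.1 then a.2 :: recv so.1 j else recv so.1 j)
                (ordd so.1) in
  if ready st1 then
    (BS (recv st1) (fun j => selected st1 j ++ ordd st1 j), so.2 ++ batch st1)
  else (st1, so.2).

Definition run (arr : seq ('I_m * nat)) : seq Tx := (foldl step (init_state, [::]) arr).2.

(* Execution sequence of the sub-transactions calling contract eps on its
   contract shard: the received ordered list of OTXs calling eps. *)
Definition exec (arr : seq ('I_m * nat)) (eps : Ct) : seq Tx :=
  [seq tx <- run arr | eps \in Ups tx].

End Haechi.

(* Main.v *)
Require Import Defs.
From mathcomp Require Import all_boot.
Set Implicit Arguments. Unset Strict Implicit. Unset Printing Implicit Defensive.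
Lemma flat_mem_eq (A B : eqType) (f : A -> seq B) (s : seq A) a b z :
  uniq (flatten [seq f x | x <- s]) -> a \in s -> b \in s -> z \in f a -> z \in f b -> a = b.
Proof.
elim: s => [|c s IH] //= Hu; rewrite cat_uniq in Hu; case/and3P: Hu => _ Hd Hu.
have Hin : forall x, x \in s -> z \in f x -> z \in flatten [seq f x | x <- s].
  by move=> x xs zx; apply/flattenP; exists (f x) => //; apply: map_f.
rewrite !inE => /orP[/eqP->|Ha] /orP[/eqP->|Hb] za zb //.
- by case/negP: Hd; apply/hasP; exists z => //; apply: Hin zb.
- by case/negP: Hd; apply/hasP; exists z => //; apply: Hin za.
- exact: IH.
Qed.

Lemma flat_uniq1 (A B : eqType) (f : A -> seq B) (s : seq A) a :
  uniq (flatten [seq f x | x <- s]) -> a \in s -> uniq (f a).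
Proof.
elim: s => [|c s IH] //= Hu; rewrite cat_uniq in Hu; case/and3P: Hu => Hc _ Hu.
by rewrite inE => /orP[/eqP->|Ha] //; apply: IH.
Qed.

Lemma flat_uniq (A B : eqType) (f : A -> seq B) (s : seq A) :
  uniq s -> (forall x, x \in s -> uniq (f x)) ->
  (forall x y z, x \in s -> y \in s -> z \in f x -> z \in f y -> x = y) ->
  uniq (flatten [seq f x | x <- s]).
Proof.
elim: s => [|c s IH] //= /andP[cs us] Hf Hd.
rewrite cat_uniq Hf ?mem_head //= IH //; last first.
  by move=> x y z xs ys; apply: Hd; rewrite inE ?xs ?ys orbT.
  by move=> x xs; apply: Hf; rewrite inE xs orbT.
rewrite andbT; apply/hasP => -[z /flattenP[t /mapP[x xs ->] zx] zc].
have E := Hd c x z (mem_head _ _) _ zc zx.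
by move: cs; rewrite E ?xs // inE xs orbT.
Qed.

Lemma index_filter (T : eqType) (p : pred T) (s : seq T) x y :
  uniq s -> x \in filter p s -> y \in filter p s -> index x s < index y s ->
  index x (filter p s) < index y (filter p s).
Proof.
elim: s => [|z s IH] //= /andP[zs us].
have nin : forall w, w \in filter p s -> z != w.
  by move=> w; rewrite mem_filter => /andP[_ ws]; apply/eqP => E; rewrite E ws in zs.
case: (eqVneq z x) => [Ex|nx]; case: (eqVneq z y) => [Ey|ny] //=.
- move: Ex => <- xin yin _; case: (p z) xin yin => /=; rewrite ?eqxx ?(negbTE ny) //=.
  by move/nin; rewrite eqxx.
- rewrite ltnS => xin yin H; case pz: (p z) xin yin => /=; rewrite ?inE ?(eq_sym x) ?(eq_sym y) ?(negbTE nx) ?(negbTE ny) /=.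
  + by move=> *; apply: IH.
  + by move=> *; apply: IH.
Qed.

Lemma index_map_uniq (A B : eqType) (f : A -> B) (s : seq A) x :
  uniq (map f s) -> x \in s -> index (f x) (map f s) = index x s.
Proof.
move=> Hu xs.
have Hl : index x s < size (map f s) by rewrite size_map index_mem.
have := index_uniq (f x) Hl Hu.
by rewrite (nth_map x) ?index_mem // nth_index.
Qed.

Lemma sorted_index (T : eqType) (r : rel T) (s : seq T) x y :
  transitive r -> reflexive r -> sorted r s -> x \in s -> y \in s -> ~~ r y x ->
  index x s < index y s.
Proof.
move=> tr rf so xs ys nr.
case: (ltngtP (index x s) (index y s)) => // H.
  have := sorted_ltn_nth tr x so; rewrite /prop_in2 => /(_ (index y s) (index x s)).
  by rewrite !inE !index_mem ys xs !nth_index // => /(_ isT isT H) h; rewrite h in nr.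
have : nth x s (index x s) = nth x s (index y s) by rewrite H.
by rewrite !nth_index // => E; rewrite E rf in nr.
Qed.

Lemma foldr_minn_le (d : nat) (s : seq nat) x : x \in s -> foldr minn d s <= x.
Proof.
elim: s => [|c s IH] //=; rewrite inE => /orP[/eqP->|H]; first by rewrite geq_minl.
by rewrite (leq_trans (geq_minr _ _)) // IH.
Qed.

Section Proof.
Variables (Tx Ct : eqType) (m : nat) (Ups : Tx -> seq Ct) (os : pred Ct)
  (C : 'I_m -> seq (block Tx)).
Hypothesis srt : forall i : 'I_m, sorted ltn [seq bts b | b <- C i].
Hypothesis Gu : uniq (flatten [seq flatten [seq btxs b | b <- C i] | i <- enum 'I_m]).

Local Notation blk := (blk C).
Local Notation OTX := (OTX Ups os).

Lemma inblk_size tx i h : tx \in btxs (blk i h) -> h < size (C i).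
Proof. by rewrite /Defs.blk; case: ltnP => // H; rewrite nth_default. Qed.

Lemma Gu' : uniq (flatten [seq flatten [seq btxs (blk i h) | h <- iota 0 (size (C i))]
   | i <- enum 'I_m]).
Proof.
suff E : forall i, [seq btxs b | b <- C i] = [seq btxs (blk i h) | h <- iota 0 (size (C i))].
  by rewrite -(eq_map (fun i => congr1 flatten (E i))).
move=> i; rewrite -{1}(mkseq_nth (Block 0 [::]) (C i)) /mkseq -map_comp //.
Qed.

Lemma posu tx i h i' h' : tx \in btxs (blk i h) -> tx \in btxs (blk i' h') -> i = i' /\ h = h'.
Proof.
move=> H1 H2.
have Hin : forall j g, tx \in btxs (blk j g) ->
   tx \in flatten [seq btxs (blk j h) | h <- iota 0 (size (C j))].
  move=> j g Hg; apply/flattenP; exists (btxs (blk j g)) => //.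
  by apply: map_f; rewrite mem_iota add0n (inblk_size Hg).
have Ei : i = i' by apply: (flat_mem_eq Gu' (mem_enum _ i) (mem_enum _ i') (Hin _ _ H1) (Hin _ _ H2)).
subst i'; split => //.
have Ui := flat_uniq1 Gu' (mem_enum _ i).
apply: (flat_mem_eq Ui _ _ H1 H2); rewrite mem_iota add0n; [exact: inblk_size H1|exact: inblk_size H2].
Qed.

Lemma blk_uniq i h : uniq (btxs (blk i h)).
Proof.
case: (ltnP h (size (C i))) => Hh; last by rewrite /Defs.blk nth_default.
have Ui := flat_uniq1 Gu' (mem_enum _ i).
by apply: (flat_uniq1 Ui); rewrite mem_iota add0n Hh.
Qed.

Lemma bts_mono i h1 h2 : h1 < h2 -> h2 < size (C i) -> bts (blk i h1) < bts (blk i h2).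
Proof.
move=> H12 H2.
have := sorted_ltn_nth ltn_trans 0 (srt i); rewrite /prop_in2 => /(_ h1 h2).
rewrite !inE !size_map (ltn_trans H12 H2) H2 => /(_ isT isT H12).
by rewrite !(nth_map (Block 0 [::])) // (ltn_trans H12 H2).
Qed.

Lemma bts_le_inv i h1 h2 : bts (blk i h1) <= bts (blk i h2) -> h1 < size (C i) -> h1 <= h2.
Proof.
move=> Hle H1; rewrite leqNgt; apply/negP => H21.
by have := bts_mono H21 H1; rewrite ltnNge Hle.
Qed.

Definition precB tx1 tx2 := exists (i1 : 'I_m) h1 (i2 : 'I_m) h2,
  [/\ tx1 \in btxs (blk i1 h1), tx2 \in btxs (blk i2 h2) &
   ((i1 = i2 /\ h1 = h2 /\ index tx1 (btxs (blk i1 h1)) < index tx2 (btxs (blk i1 h1)))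
    \/ bts (blk i1 h1) < bts (blk i2 h2))].

Lemma at_pos_mem tx i h k : at_pos C tx i h k -> tx \in btxs (blk i h) /\ index tx (btxs (blk i h)) = k.
Proof.
case/and3P=> _ Hk /eqP Hn.
have Hm : tx \in btxs (blk i h) by rewrite -Hn mem_nth.
split => //; rewrite -{1}Hn; exact: index_uniq (blk_uniq i h).
Qed.

Lemma precP_B tx1 tx2 : precP C tx1 tx2 -> precB tx1 tx2.
Proof.
case=> i1 [h1 [k1 [i2 [h2 [k2 [P1 [P2 H]]]]]]].
have [M1 I1] := at_pos_mem P1; have [M2 I2] := at_pos_mem P2.
exists i1, h1, i2, h2; split => //.
case: H => [[Ei Eh Hk]|[Ei Hh]|Hb]; last by right.
- by left; subst i2 h2; rewrite I1 I2.
- by right; subst i2; apply: bts_mono => //; apply: inblk_size M2.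
Qed.


Definition Mb (st : bstate m) := flatten [seq flatten [seq filter OTX (btxs (blk i h))
   | h <- selected C st i] | i <- enum 'I_m].

Lemma cl_items_snd (c : crosslink Tx m) : [seq x.2 | x <- cl_items c] = cl_txs c.
Proof. by rewrite /cl_items -map_comp; apply: unzip2_zip; rewrite size_iota. Qed.

Lemma batch_perm st : perm_eq (batch Ups os C st) (Mb st).
Proof.
rewrite /batch; apply: perm_trans (perm_map _ (permEl (perm_sort _ _))) _.
rewrite map_flatten -map_comp /Mb; set L := map _ _; suff -> : L = [seq flatten [seq filter OTX (btxs (blk i h))
   | h <- selected C st i] | i <- enum 'I_m] by [].
rewrite /L; apply: eq_map => i /=.
rewrite map_flatten -map_comp; congr flatten; apply: eq_map => h /=.
by rewrite cl_items_snd.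
Qed.


Lemma Mb_mem st tx : reflect (exists i h, [/\ h \in selected C st i, tx \in btxs (blk i h) & OTX tx])
  (tx \in Mb st).
Proof.
apply: (iffP flattenP).
  case=> s /mapP[i _ ->] /flattenP[t /mapP[h hs ->]]; rewrite mem_filter => /andP[o t'].
  by exists i, h.
case=> i [h [hs t o]]; exists (flatten [seq filter OTX (btxs (blk i h)) | h <- selected C st i]).
  by apply: map_f; rewrite mem_enum.
apply/flattenP; exists (filter OTX (btxs (blk i h))); first by apply: map_f.
by rewrite mem_filter o.
Qed.

Lemma selected_uniq st i : uniq (selected C st i).
Proof. by rewrite /selected /shardCLs !filter_uniq // iota_uniq. Qed.

Lemma Mb_uniq st : uniq (Mb st).
Proof.
apply: flat_uniq; first exact: enum_uniq.
- move=> i _; apply: flat_uniq; first exact: selected_uniq.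
  + by move=> h _; rewrite filter_uniq // blk_uniq.
  + move=> h h' z _ _; rewrite !mem_filter => /andP[_ H1] /andP[_ H2].
    by case: (posu H1 H2).
- move=> i i' z _ _ /flattenP[t /mapP[h _ ->]] H1 /flattenP[t' /mapP[h' _ ->]] H2.
  move: H1 H2; rewrite !mem_filter => /andP[_ H1] /andP[_ H2].
  by case: (posu H1 H2).
Qed.

Lemma batch_mem st tx : reflect (exists i h, [/\ h \in selected C st i, tx \in btxs (blk i h) & OTX tx])
  (tx \in batch Ups os C st).
Proof. by rewrite (perm_mem (batch_perm st)); apply: Mb_mem. Qed.

Lemma batch_uniq st : uniq (batch Ups os C st).
Proof. by rewrite (perm_uniq (batch_perm st)) Mb_uniq. Qed.

Lemma prefix_mem n s : n < prefix_len s -> n \in s.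
Proof.
rewrite /prefix_len => H.
have := before_find 0 H.
have Hs : n < size (iota 0 (size s).+1).
  by apply: leq_trans H (find_size _ _).
rewrite size_iota in Hs.
by rewrite nth_iota // add0n => /negbFE.
Qed.

Lemma thr_le st i : thr C st <= lastTS C st i.
Proof. by apply: foldr_minn_le; apply: map_f; rewrite mem_enum. Qed.


Lemma key_le_total : total (@key_le Tx).
Proof.
move=> [[a b] x] [[c d] y]; rewrite /key_le /=.
by case: (ltngtP a c) => //= _; rewrite leq_total.
Qed.

Lemma key_le_trans : transitive (@key_le Tx).
Proof.
move=> [[b bi] y] [[a ai] x] [[c ci] z]; rewrite /key_le /=.
case/orP => [H1|/andP[/eqP E1 H1]] /orP [H2|/andP[/eqP E2 H2]]; apply/orP.
- by left; exact: ltn_trans H1 H2.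
- by left; rewrite -E2.
- by left; rewrite E1.
- by right; rewrite E1 E2 eqxx (leq_trans H1 H2).
Qed.

Lemma key_le_refl : reflexive (@key_le Tx).
Proof. by move=> [[a b] x]; rewrite /key_le /= eqxx leqnn orbT. Qed.

Lemma mem_zip_index (T : eqType) (s : seq T) x :
  x \in s -> (index x s, x) \in zip (iota 0 (size s)) s.
Proof.
move=> xs.
have Hl : index x s < size (zip (iota 0 (size s)) s) by rewrite size_zip size_iota minnn index_mem.
have := mem_nth (0, x) Hl.
by rewrite nth_zip ?size_iota // nth_iota ?index_mem // add0n nth_index.
Qed.

Definition Lb (st : bstate m) := flatten [seq flatten [seq cl_items (mkCL Ups os C i h)
   | h <- selected C st i] | i <- enum 'I_m].

Lemma Lb_mem st i h tx : h \in selected C st i -> tx \in btxs (blk i h) -> OTX tx ->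
  (bts (blk i h), index tx (filter OTX (btxs (blk i h))), tx) \in Lb st.
Proof.
move=> hs t o; apply/flattenP; exists (flatten [seq cl_items (mkCL Ups os C i h) | h <- selected C st i]).
  by apply: map_f; rewrite mem_enum.
apply/flattenP; exists (cl_items (mkCL Ups os C i h)); first by apply: map_f.
rewrite /cl_items /mkCL /=.
apply/mapP; exists (index tx (filter OTX (btxs (blk i h))), tx) => //; apply: mem_zip_index.
by rewrite mem_filter o.
Qed.

Lemma batch_sorted st tx1 tx2 i1 h1 i2 h2 :
  tx1 \in btxs (blk i1 h1) -> tx2 \in btxs (blk i2 h2) -> OTX tx1 -> OTX tx2 ->
  h1 \in selected C st i1 -> h2 \in selected C st i2 ->
  ((i1 = i2 /\ h1 = h2 /\ index tx1 (btxs (blk i1 h1)) < index tx2 (btxs (blk i1 h1)))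
    \/ bts (blk i1 h1) < bts (blk i2 h2)) ->
  index tx1 (batch Ups os C st) < index tx2 (batch Ups os C st).
Proof.
move=> t1 t2 o1 o2 s1 s2 H.
have U : uniq [seq x.2 | x <- sort (@key_le Tx) (Lb st)] by exact: (batch_uniq st).
have X1 := Lb_mem s1 t1 o1; have X2 := Lb_mem s2 t2 o2.
rewrite -(mem_sort (@key_le Tx)) in X1; rewrite -(mem_sort (@key_le Tx)) in X2.
rewrite /batch -/(Lb st).
have I1 := index_map_uniq U X1; have I2 := index_map_uniq U X2; rewrite /= in I1 I2; rewrite I1 I2.
apply: sorted_index X1 X2 _; [exact: key_le_trans|exact: key_le_refl| |].
  by apply: sort_sorted; exact: key_le_total.
rewrite /key_le /=; case: H => [[E1 [E2 Hi]]|Hb].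
  subst i2 h2; rewrite ltnn eqxx /= -ltnNge.
  by apply: index_filter; rewrite ?mem_filter ?o1 ?o2 ?blk_uniq.
by rewrite negb_or -leqNgt (ltnW Hb) /= negb_and (gtn_eqF Hb).
Qed.


Lemma sel_prev (st : bstate m) tx1 i1 h1 i2 h2 :
  ready st -> (forall i h, h \in recv st i -> h < size (C i)) ->
  tx1 \in btxs (blk i1 h1) -> h2 \in selected C st i2 -> h1 \notin ordd st i1 ->
  bts (blk i1 h1) <= bts (blk i2 h2) -> h1 \in selected C st i1.
Proof.
move=> rdy R t1 s2 no Hb.
have ne : shardCLs st i1 != [::] by apply: (allP rdy); rewrite mem_enum.
have lin : last 0 (shardCLs st i1) \in shardCLs st i1.
  by move: ne; case: (shardCLs st i1) => //= c s _; exact: mem_last.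
set l := last 0 (shardCLs st i1) in lin.
have lp : l < prefix_len (recv st i1).
  by move: lin; rewrite /shardCLs mem_filter mem_iota add0n => /andP[_].
have ls : l < size (C i1) by apply: R; apply: prefix_mem.
have b2 : bts (blk i2 h2) <= thr C st by move: s2; rewrite mem_filter => /andP[].
have b1 : bts (blk i1 h1) <= bts (blk i1 l).
  by apply: leq_trans Hb (leq_trans b2 (thr_le st i1)).
have hl := bts_le_inv b1 (inblk_size t1).
rewrite /selected mem_filter (leq_trans Hb b2) /shardCLs mem_filter no mem_iota add0n /=.
exact: leq_ltn_trans hl lp.
Qed.

Definition Inv (so : bstate m * seq Tx) :=
 [/\ forall i h, h \in recv so.1 i -> h < size (C i),
     uniq so.2,
     forall i h tx, h \in ordd so.1 i -> tx \in btxs (blk i h) -> OTX tx -> tx \in so.2,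
     forall tx, tx \in so.2 -> exists i h, h \in ordd so.1 i /\ tx \in btxs (blk i h)
   & forall tx1 tx2, precB tx1 tx2 -> OTX tx1 -> tx2 \in so.2 -> index tx1 so.2 < index tx2 so.2 ].

Lemma Inv_step so a : Inv so -> a.2 < size (C a.1) -> Inv (step Ups os C so a).
Proof.
case: so => st out [R U B Cc D] Ha; rewrite /step /=.
set st1 := BS _ _.
have R1 : forall i h, h \in recv st1 i -> h < size (C i).
  move=> i h; rewrite /st1 /=; case: eqP => [->|_]; last exact: R.
  by rewrite inE => /orP[/eqP->|]; [exact: Ha|exact: R].
case: ifP => rdy; last by split.
split => //=.
- rewrite cat_uniq U batch_uniq andbT /=; apply/hasP => -[tx /batch_mem [i [h [hs t o]]] tout].
  have [i' [h' [ho t']]] := Cc _ tout.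
  case: (posu t t') => Ei Eh; subst i' h'.
  by move: hs; rewrite /selected /shardCLs !mem_filter ho /= andbF.
- move=> i h tx H t o; rewrite mem_cat; move: H; rewrite mem_cat => /orP[hs|ho].
    by apply/orP; right; apply/batch_mem; exists i, h.
  by rewrite (B _ _ _ ho t o).
- move=> tx; rewrite mem_cat => /orP[tout|/batch_mem [i [h [hs t o]]]].
    by have [i [h [ho t]]] := Cc _ tout; exists i, h; rewrite mem_cat ho orbT.
  by exists i, h; rewrite mem_cat hs.
- move=> tx1 tx2 P o1; rewrite mem_cat => /orP[t2|t2].
    have := D _ _ P o1 t2; rewrite !index_cat t2.
    case: ifP => // N H; have := leq_trans H (index_size tx2 out); by rewrite index_mem N.
  case: (boolP (tx2 \in out)) => [t2o|t2o].
    have := D _ _ P o1 t2o; rewrite !index_cat t2o.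
    case: ifP => // N H; have := leq_trans H (index_size tx2 out); by rewrite index_mem N.
  rewrite !index_cat (negbTE t2o).
  case: (boolP (tx1 \in out)) => [t1o|t1o]; first by rewrite ltn_addr // index_mem.
  rewrite ltn_add2l.
  case/batch_mem: t2 => i2 [h2 [s2 t2 o2]].
  case: P => j1 [g1 [j2 [g2 [T1 T2 H]]]].
  case: (posu T2 t2) => Ei Eh; subst j2 g2.
  have Hb : bts (blk j1 g1) <= bts (blk i2 h2).
    by case: H => [[E1 [E2 _]]|/ltnW //]; subst.
  have no : g1 \notin ordd st1 j1.
    by apply/negP => ho; move: t1o; rewrite (B _ _ _ ho T1 o1).
  have s1 := sel_prev rdy R1 T1 s2 no Hb.
  exact: batch_sorted T1 t2 o1 o2 s1 s2 H.
Qed.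


Lemma Inv_fold arr so : Inv so -> (forall a, a \in arr -> a.2 < size (C a.1)) ->
  Inv (foldl (step Ups os C) so arr).
Proof.
elim: arr so => [|a arr IH] so //= I H.
apply: IH; last by move=> b bs; apply: H; rewrite inE bs orbT.
by apply: Inv_step => //; apply: H; rewrite mem_head.
Qed.

Lemma Inv_init : Inv (init_state m, [::]).
Proof. by split => //= i h. Qed.

End Proof.

Theorem theorem1 (Tx Ct : eqType) (m : nat) (Ups : Tx -> seq Ct) (os : pred Ct)
    (C : 'I_m -> seq (block Tx)) (arr : seq ('I_m * nat)) (eps : Ct) (tx1 tx2 : Tx) :
  (forall i : 'I_m, sorted ltn [seq bts b | b <- C i]) ->
  uniq (flatten [seq flatten [seq btxs b | b <- C i] | i <- enum 'I_m]) ->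
  (forall a, a \in arr -> a.2 < size (C a.1)) ->
  os eps -> eps \in Ups tx1 -> eps \in Ups tx2 ->
  precP C tx1 tx2 ->
  tx2 \in exec Ups os C arr eps ->
  index tx1 (exec Ups os C arr eps) < index tx2 (exec Ups os C arr eps).
Proof.
move=> srt Gu Harr Hos e1 e2 P t2.
have [_ U _ _ D] := Inv_fold srt Gu (Inv_init Ups os C) Harr.
have o1 : OTX Ups os tx1 by apply/hasP; exists eps.
have t2r : tx2 \in run Ups os C arr by move: t2; rewrite mem_filter => /andP[].
have Hi := D _ _ (precP_B srt Gu P) o1 t2r.
have t1r : tx1 \in run Ups os C arr.
  by rewrite -index_mem (leq_trans Hi) // index_size.
by apply: index_filter U _ _ Hi; rewrite mem_filter ?e1 ?e2 ?t1r ?t2r.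
Qed.
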